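(* Let $D[X]$ be a directed sub-block and let $W\subsetneq X$ with $|W|\ge2$ contain a node $i$ that is reachable from all other nodes both in $D[W]$ and in $D[X]$. Then there is a node $k\in X\setminus W$ such that $W\cup\{k\}$ can be generated from $W$, and $i$ is reachable from all other nodes in $D[W\cup\{k\}]$.
   Context: $D=(V,A)$ is a directed graph. $\mathrm{IN}(X)$ is the set of nodes from which some member of $X$ is reachable by a directed path. For disjoint nonempty $X,Y,Z$, $f_E(X,Y,Z)=1$ iff $\mathrm{IN}(X)\cap\mathrm{IN}(Y)=\emptyset$ computed in $D-Z$; node $j$ is dynamically partitioning relative to $k$ and $Y$ iff $f_E(\{k\},Y,\{j\})=1$. A set $W_n$ of size $n$ can be generated from $W_m$ of size $m$, $2\le m<n$, iff there are sets $W_m\subset\dots\subset W_n$ with $W_{l+1}=W_l\cup\{k\}$, $k\in V\setminus W_l$, such that there is an arc from $k$ to some $j\in W_l$ that is not dynamically partitioning relative to $k$ and $W_l\setminus\{j\}$. $D[W]$ is the subgraph induced on $W$; reachability in $D[W]$ is via directed paths inside $D[W]$. A graph is biconnected if it has at least three vertices, is connected and remains connected after deleting any one vertex. $D[X]$ is a directed sub-block if some node of $X$ is reachable within $D[X]$ from all other nodes and the underlying undirected graph of $D[X]$ is biconnected. *)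

(* Defs.v *)
(* A directed graph D = (V, A) is a finite type V with an
   arc relation a : rel V (a u v  <->  arc u -> v). *)
From mathcomp Require Import all_boot.
Set Implicit Arguments. Unset Strict Implicit. Unset Printing Implicit Defensive.

Section Defs.
Variables (V : finType) (a : rel V).

Definition restr (S : {set V}) : rel V :=
  [rel u v | [&& u \in S, v \in S & a u v]].

Definition reach_in (S : {set V}) (u v : V) : bool :=
  [&& u \in S, v \in S & connect (restr S) u v].

Definition IN_minus (X Z : {set V}) : {set V} :=
  [set u | (u \notin Z) && [exists x in X, reach_in (~: Z) u x]].

Definition fE (X Y Z : {set V}) : bool :=
  IN_minus X Z :&: IN_minus Y Z == set0.

Definition dyn_part (j k : V) (Y : {set V}) : bool := fE [set k] Y [set j].

Definition gen_step (W W' : {set V}) : Prop :=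
  exists k, [/\ k \notin W, W' = k |: W &
    exists j, [/\ j \in W, a k j & ~~ dyn_part j k (W :\ j)]].

Inductive gen_chain : {set V} -> {set V} -> Prop :=
| gen_one W W' : gen_step W W' -> gen_chain W W'
| gen_more W W' W'' : gen_step W W' -> gen_chain W' W'' -> gen_chain W W''.

Definition can_generate (W W' : {set V}) : Prop :=
  2 <= #|W| /\ #|W| < #|W'| /\ gen_chain W W'.

Definition root_in (S : {set V}) (i : V) : Prop :=
  i \in S /\ forall u, u \in S -> reach_in S u i.

Definition uedge : rel V := [rel u v | (u != v) && (a u v || a v u)].

Definition uconnected_in (S : {set V}) : bool :=
  [forall u in S, forall v in S, connect [rel x y | [&& x \in S, y \in S & uedge x y]] u v].

Definition ubiconnected_in (S : {set V}) : bool :=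
  [&& 3 <= #|S|, uconnected_in S & [forall v in S, uconnected_in (S :\ v)]].

Definition sub_block (X : {set V}) : Prop :=
  (exists i, root_in X i) /\ ubiconnected_in X.

End Defs.

(* Main.v *)
Require Import Defs.
From mathcomp Require Import all_boot.

Lemma cross (T : finType) (e : rel T) (P : pred T) x y :
  connect e x y -> ~~ P x -> P y ->
  exists p q, [/\ connect [rel u v | [&& ~~ P u, ~~ P v & e u v]] x p,
                  ~~ P p, e p q & P q].
Proof.
move=> /connectP [s]; elim: s x => [|z s IH] x /=.
  by move=> _ -> Px Py; move: Px; rewrite Py.
move=> /andP [exz pzs] ly Px Py.
case Pz: (P z).
  by exists x, z; split => //; apply: connect0.
have [p [q [c1 Pp epq Pq]]] := IH z pzs ly (negbT Pz) Py.
exists p, q; split => //; apply: connect_trans c1.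
by apply: connect1; rewrite /restr /= Px Pz exz.
Qed.

Lemma reach_mono {V : finType} {a : rel V} {S Sp : {set V}} {u v : V} :
  S \subset Sp -> reach_in a S u v -> reach_in a Sp u v.
Proof.
move=> sub /and3P [uS vS c].
rewrite /reach_in (subsetP sub _ uS) (subsetP sub _ vS) /=.
apply: connect_sub c => x y /= /and3P [xS yS axy].
by apply: connect1; apply/and3P; split => //; apply: (subsetP sub).
Qed.

Theorem mainTheorem10 (V : finType) (a : rel V) (X W : {set V}) (i : V) :
  sub_block a X ->
  W \proper X ->
  2 <= #|W| ->
  root_in a W i ->
  root_in a X i ->
  exists k, [/\ k \in X :\: W,
                can_generate a W (k |: W) &
                root_in a (k |: W) i].
Proof.
move=> [_ bic] /properP [WX [s sX sW]] W2 [iW rootW] [iX rootX].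
have := rootX s sX => /and3P [_ _ cs].
have [k0 [j [_ k0W /and3P [k0X jX ak0j] jW]]] :=
  @cross _ _ (fun v => v \in W) _ _ cs sW iW.
have k0j : k0 != j by apply: contraNneq k0W => ->.
pose R := fun v => [exists w in W :\ j, reach_in a (~: [set j]) v w].
have relWsub : forall u v, connect [rel u v | [&& ~~ (u \in W), ~~ (v \in W)
     & restr a X u v]] u v -> connect (restr a (~: [set j])) u v.
  move=> u v; apply: connect_sub => x y /= /and3P [xW yW /and3P [_ _ axy]].
  apply: connect1; rewrite /restr /= !inE axy andbT.
  by apply/andP; split; [apply: contraNneq xW => -> | apply: contraNneq yW => ->].
have key : exists k u, [/\ k \in X :\: W, a k j,
                          reach_in a (~: [set j]) u k & R u].
  case Rk0: (R k0).
    exists k0, k0; split => //; first by rewrite inE k0W k0X.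
    by rewrite /reach_in !inE k0j connect0.
  have [w wWj] : exists w, w \in W :\ j.
    apply/set0Pn; rewrite -card_gt0; move: W2; rewrite (cardsD1 j W) jW add1n.
    by move=> h; exact: h.
  move: (wWj); rewrite !inE => /andP [wj wW].
  move/and3P: bic => [_ _ /forall_inP /(_ j jX) uc].
  have k0in : k0 \in X :\ j by rewrite !inE k0j k0X.
  have win : w \in X :\ j by rewrite !inE wj (subsetP WX _ wW).
  move/forall_inP: uc => /(_ k0 k0in) /forall_inP /(_ w win) cw.
  have Rw : R w.
    by apply/existsP; exists w; rewrite wWj /reach_in !inE wj connect0.
  have [p [q [_ Rp /and3P [pin qin /andP [_ ue]] Rq]]] :=
    @cross _ _ R _ _ cw (negbT Rk0) Rw.
  move: pin qin; rewrite !inE => /andP [pj pX] /andP [qj qX].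
  have aqp : a q p.
    case/orP: ue => // apq; exfalso; move/negP: Rp; apply.
    case/existsP: Rq => w' /andP [w'in /and3P [_ w'j cqw]].
    apply/existsP; exists w'; rewrite w'in /reach_in w'j !inE pj /=.
    by apply: connect_trans cqw; apply: connect1; rewrite /restr /= !inE pj qj apq.
  have pW : p \notin W.
    apply: contra Rp => pW; apply/existsP; exists p.
    by rewrite !inE pj pW /reach_in !inE pj connect0.
  have := rootX p pX => /and3P [_ _ cp].
  have [k [y [ck kW /and3P [kX yX aky] yW]]] :=
    @cross _ _ (fun v => v \in W) _ _ cp pW iW.
  have yj : y = j.
    apply/eqP; apply: contraNT Rp => yj.
    apply/existsP; exists y; rewrite !inE yj yW /reach_in !inE pj yj /=.
    apply: connect_trans (relWsub _ _ ck) _.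
    by apply: connect1; rewrite /restr /= !inE yj aky /= andbT; apply: contraNneq kW => ->.
  subst y.
  exists k, q; split => //; first by rewrite inE kW kX.
  rewrite /reach_in !inE qj /=; apply/andP; split.
    by apply: contraNneq kW => ->.
  apply: connect_trans (relWsub _ _ ck).
  by apply: connect1; rewrite /restr /= !inE qj pj aqp.
have [k [u [kin akj rukj Ru]]] := key.
move: (kin); rewrite inE => /andP [kW kX].
exists k; split => //.
  split => //; split; first by rewrite cardsU1 kW add1n ltnSn.
  apply: gen_one; exists k; split => //; exists j; split => //.
  rewrite /dyn_part /fE; apply/set0Pn; exists u.
  move: (rukj) => /and3P [uj _ _].
  rewrite !inE; apply/andP; split; apply/andP; split.
  - by move: uj; rewrite !inE.
  - by apply/existsP; exists k; rewrite inE eqxx rukj.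
  - by move: uj; rewrite !inE.
  - exact: Ru.
split; first by rewrite inE iW orbT.
move=> v; rewrite in_setU1 => /orP [/eqP -> | vW]; last first.
  exact: reach_mono (subsetUr [set k] W) (rootW v vW).
have := reach_mono (subsetUr [set k] W) (rootW j jW) => /and3P [_ _ c].
rewrite /reach_in !inE eqxx iW orbT /=.
apply: connect_trans c; apply: connect1.
by rewrite /restr /= !inE eqxx jW orbT akj.
Qed.
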